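(* Let $G$ be a connected bipartite simple graph with $m$ edges. Then \[ \mathscr{K}_e(G)\ge 2m-\frac32, \] with equality if and only if $G$ is complete bipartite.
   Context: Kemeny's constant of an irreducible finite Markov chain with transition matrix $P$ whose eigenvalues (with multiplicity) are $1=\rho_1,\rho_2,\dots,\rho_N$ (with $1$ simple) is $\mathscr{K}(P)=\sum_{i=2}^{N}\frac{1}{1-\rho_i}$. $\mathscr{K}_e(G)$ is Kemeny's constant of the simple random walk on the arcs of $G$ (ordered pairs $(u,v)$ with $\{u,v\}$ an edge), where from $(u,v)$ one moves to $(v,w)$ with probability $1/\deg(v)$ for each neighbor $w$ of $v$. *)

(* Defs.v *)
From HB Require Import structures.
From mathcomp Require Import all_boot all_order all_algebra all_field.
Set Implicit Arguments. Unset Strict Implicit. Unset Printing Implicit Defensive.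
Import Order.TTheory GRing.Theory Num.Theory.
Local Open Scope ring_scope.

Definition eigenvalues (n : nat) (P : 'M[algC]_n) : seq algC :=
  sval (closed_field_poly_normal (char_poly P)).

(* Kemeny's constant: sum over eigenvalues rho_2..rho_N (i.e. all eigenvalues
   with one copy of the eigenvalue 1 removed) of 1/(1 - rho_i). *)
Definition kemeny (n : nat) (P : 'M[algC]_n) : algC :=
  \sum_(r <- rem 1 (eigenvalues P)) (1 - r)^-1.

Definition simple_graph (T : finType) (e : rel T) : Prop :=
  symmetric e /\ irreflexive e.

Definition connected_graph (T : finType) (e : rel T) : Prop :=
  forall x y : T, connect e x y.

Definition bipartite (T : finType) (e : rel T) : Prop :=
  exists c : T -> bool, forall x y, e x y -> c x != c y.

Definition complete_bipartite (T : finType) (e : rel T) : Prop :=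
  exists c : T -> bool, forall x y, e x y = (c x != c y).

Definition deg (T : finType) (e : rel T) (v : T) : nat := #|[set w | e v w]|.

Definition nedges (T : finType) (e : rel T) : nat :=
  #|[set E : {set T} | [exists u, exists v, e u v && (E == [set u; v])]]|.

Definition arc (T : finType) (e : rel T) := {a : T * T | e a.1 a.2}.

Definition arc_walk (T : finType) (e : rel T) : 'M[algC]_#|{: arc e}| :=
  \matrix_(i, j)
    let a := val (enum_val i : arc e) in
    let b := val (enum_val j : arc e) in
    if a.2 == b.1 then ((deg e a.2)%:R)^-1 else 0.

Definition kemeny_e (T : finType) (e : rel T) : algC := kemeny (arc_walk e).

(* Main.v *)
From HB Require Import structures.
From mathcomp Require Import all_boot all_order all_algebra all_field.
From mathcomp Require Import ring.
Require Import Defs.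
Import Order.TTheory GRing.Theory Num.Theory.
Local Open Scope ring_scope.
Set Implicit Arguments. Unset Strict Implicit. Unset Printing Implicit Defensive.


Lemma char_poly_XY (R : comNzRingType) p q (A : 'M[R]_(p, q)) (B : 'M[R]_(q, p)) :
  'X^q * char_poly (A *m B) = 'X^p * char_poly (B *m A).
Proof.
pose A' := map_mx polyC A; pose B' := map_mx polyC B.
pose M0 := block_mx ('X%:M : 'M_p) A' B' (1%:M : 'M_q).
have XB : ('X%:M : 'M_q) *m B' = B' *m 'X%:M.
  by rewrite !mul_scalar_mx mul_mx_scalar.
have E1 : \det (block_mx (1%:M : 'M_p) (- A') 0 ('X%:M : 'M_q) *m M0)
         = char_poly (A *m B) * 'X^q.
  rewrite /M0 mulmx_block !mul1mx !mul0mx !add0r mulmx1 mulNmx addrN.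
  by rewrite det_lblock mulmx1 det_scalar /char_poly /char_poly_mx map_mxM.
have E2 : \det (block_mx (1%:M : 'M_p) 0 (- B') ('X%:M : 'M_q) *m M0)
         = 'X^p * char_poly (B *m A).
  rewrite /M0 mulmx_block !mul1mx !mul0mx !addr0 mulmx1 mulNmx.
  rewrite XB addNr det_ublock det_scalar /char_poly /char_poly_mx map_mxM.
  by rewrite addrC -mulNmx.
rewrite det_mulmx det_ublock !det_scalar expr1n mul1r in E1.
rewrite det_mulmx det_lblock !det_scalar expr1n mul1r in E2.
by rewrite mulrC -E1 E2.
Qed.

Lemma dirichlet (I : finType) (E : I -> I -> algC) (s u : I -> algC) (l : algC) :
  (forall i j, E i j = E j i) -> (forall i, s i != 0) -> (forall i, (s i)^* = s i) ->
  (forall i, \sum_j E i j = s i * s i) ->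
  (forall j, \sum_i u i * E i j / (s i * s j) = l * u j) ->
  \sum_i \sum_j E i j * ((u i / s i - u j / s j) * (u i / s i - u j / s j)^*)
  = 2 * (1 - l) * \sum_i u i * (u i)^*.
Proof.
move=> Es s0 sC Ed Hu.
pose y i := u i / s i.
have yC i : (y i)^* = (u i)^* / s i.
  by rewrite /y rmorphM /= fmorphV; congr (_ / _); apply: sC.
have Hy j : \sum_i E i j * y i = l * u j * s j.
  rewrite -Hu mulr_suml; apply: eq_bigr => i _; rewrite /y.
  by field; apply/andP; split.
have Hn i : y i * (y i)^* * (s i * s i) = u i * (u i)^*.
  by rewrite yC /y; field.
have A1 : \sum_i \sum_j E i j * (y i * (y i)^*) = \sum_i u i * (u i)^*.
  apply: eq_bigr => i _; rewrite -mulr_suml Ed -Hn; ring.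
have A2 : \sum_i \sum_j E i j * (y j * (y j)^*) = \sum_i u i * (u i)^*.
  rewrite exchange_big /= -A1; apply: eq_bigr => i _; apply: eq_bigr => j _.
  by rewrite Es.
have B1 : \sum_i \sum_j E i j * (y i * (y j)^*) = l * \sum_i u i * (u i)^*.
  rewrite exchange_big /= mulr_sumr; apply: eq_bigr => j _.
  have -> : \sum_i E i j * (y i * (y j)^*) = (\sum_i E i j * y i) * (y j)^*.
    by rewrite mulr_suml; apply: eq_bigr => i _; ring.
  by rewrite Hy yC; field.
have B2 : \sum_i \sum_j E i j * (y j * (y i)^*) = l * \sum_i u i * (u i)^*.
  rewrite -B1 exchange_big /=; apply: eq_bigr => i _; apply: eq_bigr => j _.
  by rewrite Es.
have -> : \sum_i \sum_j E i j * ((u i / s i - u j / s j) * (u i / s i - u j / s j)^*)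
  = \sum_i \sum_j (E i j * (y i * (y i)^*) + E i j * (y j * (y j)^*)
                   - E i j * (y i * (y j)^*) - E i j * (y j * (y i)^*)).
  apply: eq_bigr => i _; apply: eq_bigr => j _; rewrite rmorphB /=.
  rewrite -/(y i) -/(y j); ring.
under eq_bigr => i _ do rewrite !sumrB big_split /=.
rewrite !sumrB big_split /= A1 A2 B1 B2; ring.
Qed.

Lemma pair_set2 (T : finType) (e : rel T) : irreflexive e ->
  forall x y u v, e x y -> e u v ->
  ([set x; y] == [set u; v]) = ((x, y) == (u, v)) || ((x, y) == (v, u)).
Proof.
move=> eirr x y u v exy euv.
apply/idP/idP.
  move/eqP=> H.
  have hx : x \in [set u; v] by rewrite -H set21.
  have hy : y \in [set u; v] by rewrite -H set22.
  move: hx hy; rewrite !in_set2 => /orP[]/eqP hx /orP[]/eqP hy; subst x y;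
    rewrite ?eqxx ?orbT //; by rewrite eirr in exy.
case/orP => /eqP [-> ->] //; by rewrite setUC.
Qed.

Lemma card_arc (T : finType) (e : rel T) : symmetric e -> irreflexive e ->
  #|{: arc e}| = (2 * nedges e)%N.
Proof.
move=> hsym eirr; rewrite card_sig.
pose A : {set T * T} := [set p | e p.1 p.2].
pose f (p : T * T) := [set p.1; p.2].
have -> : #|[pred x : T * T | e x.1 x.2]| = #|A| by apply: eq_card => p; rewrite !inE.
have -> : nedges e = #|f @: A|.
  rewrite /nedges; apply: eq_card => E; rewrite !inE.
  apply/existsP/imsetP.
    case=> u /existsP [v /andP [euv /eqP ->]]; exists (u, v) => //.
    by rewrite inE.
  case=> [[u v]]; rewrite inE /= => euv ->; exists u; apply/existsP; exists v.
  by rewrite euv eqxx.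
rewrite -sum1_card (partition_big_imset f) /= mulnC -sum_nat_const.
apply: eq_bigr => E /imsetP [[u v]]; rewrite inE /= => euv ->.
have nuv : (u, v) != (v, u).
  apply/negP => /eqP [huv _]; by rewrite huv eirr in euv.
have <- : #|[set (u, v); (v, u)]| = 2%N by rewrite cards2 nuv.
rewrite sum1dep_card; apply: eq_card => p; rewrite !inE.
case: p => x y /=.
case: (boolP (e x y)) => exy /=.
  by rewrite /f /= (pair_set2 eirr exy euv).
apply/esym/negbTE; apply/negP => /orP [] /eqP [hx hy]; subst x y; first by rewrite euv in exy.
by rewrite hsym euv in exy.
Qed.

Section Graph.
Variables (T : finType) (e : rel T).
Hypotheses (esym : symmetric e) (eirr : irreflexive e).
Hypothesis econ : connected_graph e.
Variables (u0 w0 : T).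
Hypothesis hu0 : e u0 w0.

Lemma deg_pos x : (0 < deg e x)%N.
Proof.
have [y xy yx] : exists2 y, y != x & connect e x y.
  have [->|ne] := eqVneq x u0.
    by exists w0; [rewrite eq_sym; apply: contraTneq hu0 => ->; rewrite eirr|].
  by exists u0; [rewrite eq_sym|].
move/connectP: yx => [[|z p] /= pth eq_y]; first by rewrite eq_y eqxx in xy.
move/andP: pth => [exz _].
by rewrite /deg card_gt0; apply/set0Pn; exists z; rewrite inE.
Qed.

Definition dC (x : T) : algC := (deg e x)%:R.
Definition sq (x : T) : algC := sqrtC (dC x).
Definition EC (x y : T) : algC := (e x y)%:R.

Lemma dC_sum x : dC x = \sum_y EC x y.
Proof.
rewrite /dC /deg -sum1_card natr_sum big_mkcond /=; apply: eq_bigr => y _.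
by rewrite inE /EC; case: (e x y).
Qed.

Lemma dC_gt0 x : 0 < dC x.
Proof. by rewrite /dC ltr0n deg_pos. Qed.

Lemma sq_gt0 x : 0 < sq x.
Proof. by rewrite /sq sqrtC_gt0 dC_gt0. Qed.

Lemma sq_neq0 x : sq x != 0.
Proof. by rewrite gt_eqF // sq_gt0. Qed.

Lemma sqK x : sq x * sq x = dC x.
Proof. by rewrite -expr2 /sq sqrtCK. Qed.

Lemma sq_conj x : (sq x)^* = sq x.
Proof. by apply: conj_Creal; apply: gtr0_real; apply: sq_gt0. Qed.

Lemma EC_conj x y : (EC x y)^* = EC x y.
Proof. by rewrite /EC rmorph_nat. Qed.

Lemma EC_sym x y : EC x y = EC y x.
Proof. by rewrite /EC esym. Qed.

Lemma EC2 x y : EC x y * EC x y = EC x y.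
Proof. by rewrite /EC; case: (e x y); rewrite ?mulr1 ?mulr0. Qed.


Definition ev (i : 'I_#|T|) : T := enum_val i.
Definition Smx : 'M[algC]_#|T| :=
  \matrix_(i, j) (EC (ev i) (ev j) / (sq (ev i) * sq (ev j))).
Definition Xmx : 'M[algC]_(#|{: arc e}|, #|T|) :=
  \matrix_(a, i) (if (val (enum_val a : arc e)).2 == ev i then (sq (ev i))^-1 else 0).
Definition Ymx : 'M[algC]_(#|T|, #|{: arc e}|) :=
  \matrix_(i, b) (if (val (enum_val b : arc e)).1 == ev i then (sq (ev i))^-1 else 0).

Lemma sumT (F : T -> algC) : \sum_(i < #|T|) F (ev i) = \sum_x F x.
Proof. by rewrite /ev -(big_enum_val (A := T)); apply: eq_bigl => x; rewrite inE. Qed.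

Lemma XY : Xmx *m Ymx = arc_walk e.
Proof.
apply/matrixP => a b; rewrite !mxE.
set a' := val (enum_val a : arc e); set b' := val (enum_val b : arc e).
under eq_bigr => j _ do rewrite !mxE.
rewrite (sumT (fun x => (if a'.2 == x then (sq x)^-1 else 0) *
                        (if b'.1 == x then (sq x)^-1 else 0))).
rewrite (bigD1 a'.2) //= big1 ?addr0; last first.
  by move=> x /negPf; rewrite eq_sym => ->; rewrite mul0r.
rewrite eqxx eq_sym; case: (a'.2 == b'.1); last by rewrite mulr0.
by rewrite -invfM sqK.
Qed.

Lemma sum_arc (F : arc e -> algC) :
  \sum_(i < #|{: arc e}|) F (enum_val i) = \sum_x F x.
Proof. by rewrite -(big_enum_val (A := {: arc e})); apply: eq_bigl => x; rewrite inE. Qed.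

Lemma YX : Ymx *m Xmx = Smx.
Proof.
apply/matrixP => i j; rewrite !mxE.
under eq_bigr => b _ do rewrite !mxE.
rewrite (sum_arc (fun b => (if (val b).1 == ev i then (sq (ev i))^-1 else 0) *
                        (if (val b).2 == ev j then (sq (ev j))^-1 else 0))).
rewrite /EC; case: (boolP (e (ev i) (ev j))) => hij.
  pose b0 : arc e := exist _ (ev i, ev j) hij.
  rewrite (bigD1 b0) //= big1 ?addr0 ?eqxx ?mul1r ?invfM //.
  move=> b nb; case: eqP => h1; case: eqP => h2; rewrite ?mulr0 ?mul0r //.
  by case/negP: nb; apply/eqP; apply: val_inj; rewrite /= -h1 -h2 -surjective_pairing.
rewrite (_ : false%:R = 0) // mul0r big1 // => [[[x y] hb]] _ /=.
case: eqP => h1; case: eqP => h2; rewrite ?mulr0 ?mul0r //.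
by rewrite -h1 -h2 hb in hij.
Qed.


Definition gK (r : algC) := (1 - r)^-1.

Lemma sum_rem1 (s : seq algC) : \sum_(r <- rem 1 s) gK r = \sum_(r <- s) gK r.
Proof.
have [s1|ns1] := boolP (1 \in s); last by rewrite rem_id.
rewrite [in RHS](perm_big _ (perm_to_rem s1)) big_cons /=.
by rewrite {2}/gK subrr invr0 add0r.
Qed.

Lemma prod_nseq0 k : \prod_(r <- nseq k (0 : algC)) ('X - r%:P) = 'X^k.
Proof. by elim: k => [|k IH]; rewrite ?big_nil ?expr0 // big_cons IH subr0 exprS. Qed.

Lemma sum_nseq0 k : \sum_(r <- nseq k (0 : algC)) gK r = k%:R.
Proof.
by elim: k => [|k IH]; rewrite ?big_nil // big_cons IH /gK subr0 invr1 -addn1 natrD addrC.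
Qed.

Lemma eigenvalues_prod m (P : 'M[algC]_m) :
  char_poly P = \prod_(r <- eigenvalues P) ('X - r%:P).
Proof.
rewrite /eigenvalues; case: closed_field_poly_normal => s /= hs.
by rewrite {1}hs (monicP (char_poly_monic P)) scale1r.
Qed.

Lemma kemeny_formula (dd : 'I_#|T| -> algC) :
  char_poly Smx = \prod_i ('X - (dd i)%:P) ->
  kemeny_e e = #|{: arc e}|%:R - #|T|%:R + \sum_i gK (dd i).
Proof.
move=> hS.
have H := @char_poly_XY _ _ _ Xmx Ymx; rewrite XY YX hS eigenvalues_prod in H.
rewrite -prod_nseq0 -big_cat /= -prod_nseq0 in H.
rewrite -(big_map dd predT (fun r => 'X - r%:P)) -big_cat /= in H.
have Hs := prod_XsubC_eq H.
have := perm_big (op := +%R) (x := 0) (P := predT) (F := gK) _ Hs.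
rewrite !big_cat /= !sum_nseq0 big_map => H2.
rewrite /kemeny_e /kemeny sum_rem1.
apply: (addrI (#|T|%:R)); rewrite H2 addrA addrCA subrr addr0 //.
Qed.


Lemma Smx_trC : (Smx ^t*)%sesqui = Smx.
Proof.
apply/matrixP => i j; rewrite !mxE rmorphM fmorphV rmorphM /=.
rewrite EC_conj.
rewrite (sq_conj (ev j)) (sq_conj (ev i)).
by rewrite EC_sym [sq (ev j) * _]mulrC.
Qed.

Lemma Smx_normal : Smx \is normalmx.
Proof. by apply/normalmxP; rewrite Smx_trC. Qed.

Definition Um := spectralmx Smx.
Definition dd := spectral_diag Smx.
Definition ddf i := dd 0 i.

Lemma S_decomp : Smx = invmx Um *m diag_mx dd *m Um.
Proof. exact/orthomx_spectralP/Smx_normal. Qed.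

Lemma U_unit : Um \in unitmx.
Proof. exact: spectral_unit. Qed.

Lemma char_S : char_poly Smx = \prod_i ('X - (ddf i)%:P).
Proof.
have H := @char_poly_XY _ _ _ (invmx Um *m diag_mx dd) Um.
rewrite -S_decomp mulmxA mulmxV ?U_unit // mul1mx in H.
have /mulfI : ('X^#|T| : {poly algC}) != 0 by rewrite expf_neq0 // polyX_eq0.
move=> /(_ _ _ H) ->.
rewrite char_poly_trig ?diag_mx_is_trig //.
by apply: eq_bigr => i _; rewrite mxE eqxx mulr1n.
Qed.

Lemma US : Um *m Smx = diag_mx dd *m Um.
Proof. by rewrite {1}S_decomp !mulmxA mulmxV ?U_unit // mul1mx. Qed.

Lemma eig_row i : row i Um *m Smx = ddf i *: row i Um.
Proof.
rewrite -row_mul US mul_diag_mx; apply/rowP => j.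
by rewrite !mxE.
Qed.

Lemma row_orth i j : \sum_k Um i k * (Um j k)^* = (i == j)%:R.
Proof.
have /unitarymxP /matrixP /(_ i j) := spectral_unitarymx Smx.
by rewrite !mxE => <-; apply: eq_bigr => k _; rewrite !mxE.
Qed.


Lemma row_eq (r : 'rV_#|T|) l : r *m Smx = l *: r ->
  forall j, \sum_i r 0 i * EC (ev i) (ev j) / (sq (ev i) * sq (ev j)) = l * r 0 j.
Proof.
move=> /rowP H j; have := H j; rewrite !mxE => <-.
by apply: eq_bigr => i _; rewrite mxE mulrA.
Qed.

Lemma dir_id (r : 'rV_#|T|) l : r *m Smx = l *: r ->
  \sum_i \sum_j EC (ev i) (ev j) *
     ((r 0 i / sq (ev i) - r 0 j / sq (ev j)) * (r 0 i / sq (ev i) - r 0 j / sq (ev j))^*)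
  = 2 * (1 - l) * \sum_i r 0 i * (r 0 i)^*.
Proof.
move=> H; apply: (@dirichlet _ (fun i j => EC (ev i) (ev j)) (fun i => sq (ev i))
   (fun i => r 0 i) l).
- by move=> i j; apply: EC_sym.
- by move=> i; apply: sq_neq0.
- by move=> i; apply: sq_conj.
- by move=> i; rewrite sqK dC_sum -(sumT (fun y => EC (ev i) y)).
- exact: row_eq H.
Qed.

Lemma norm_pos (r : 'rV[algC]_#|T|) : r != 0 -> 0 < \sum_i r 0 i * (r 0 i)^*.
Proof.
move=> rn0; rewrite lt_def sumr_ge0 ?andbT; last by move=> i _; apply: mul_conjC_ge0.
apply: contra rn0 => /eqP H; apply/eqP/rowP => i; rewrite mxE.
apply/eqP; rewrite -mul_conjC_eq0; apply/eqP.
by apply: (psumr_eq0P _ H) => // k _; apply: mul_conjC_ge0.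
Qed.

Lemma term_ge0 (r : 'rV[algC]_#|T|) i j : 0 <= EC (ev i) (ev j) *
     ((r 0 i / sq (ev i) - r 0 j / sq (ev j)) * (r 0 i / sq (ev i) - r 0 j / sq (ev j))^*).
Proof. by apply: mulr_ge0; [rewrite /EC ler0n | apply: mul_conjC_ge0]. Qed.

Lemma dir_ge0 (r : 'rV_#|T|) : 0 <= \sum_i \sum_j EC (ev i) (ev j) *
     ((r 0 i / sq (ev i) - r 0 j / sq (ev j)) * (r 0 i / sq (ev i) - r 0 j / sq (ev j))^*).
Proof.
apply: sumr_ge0 => i _; apply: sumr_ge0 => j _.
by apply: mulr_ge0; [rewrite /EC ler0n | apply: mul_conjC_ge0].
Qed.

Lemma le1 (r : 'rV_#|T|) l : r *m Smx = l *: r -> r != 0 -> 0 <= 1 - l.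
Proof.
move=> H rn0; have := dir_ge0 r; rewrite (dir_id H).
rewrite [2 * (1 - l)]mulrC -mulrA pmulr_lge0 // mulr_gt0 // ?norm_pos //.
Qed.

Lemma conn_const (f : T -> algC) : (forall x y, e x y -> f x = f y) -> forall x y, f x = f y.
Proof.
move=> Hf x y; move/connectP: (econ x y) => [p pth ->] {y}.
elim: p x pth => [|z p IH] x //= /andP [exz pth].
by rewrite (Hf _ _ exz) IH.
Qed.

Lemma harm0 (r : 'rV_#|T|) k : r *m Smx = r -> r 0 k = 0 -> r = 0.
Proof.
move=> H rk0.
have H1 : r *m Smx = 1 *: r by rewrite scale1r.
have := dir_id H1; rewrite subrr mulr0 mul0r => H0.
have Hij i j : e (ev i) (ev j) -> r 0 i / sq (ev i) = r 0 j / sq (ev j).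
  move=> eij.
  have Hi := psumr_eq0P (fun i0 _ => sumr_ge0 _ (fun j0 _ => term_ge0 r i0 j0)) H0 (i := i) isT.
  have := psumr_eq0P (fun j0 _ => term_ge0 r i j0) Hi (i := j) isT.
  rewrite /EC eij mul1r => /eqP; rewrite mul_conjC_eq0 subr_eq0 => /eqP //.
pose f x := r 0 (enum_rank x) / sq x.
have Hf : forall x y, e x y -> f x = f y.
  move=> x y exy; rewrite /f -{2}(enum_rankK x) -{2}(enum_rankK y).
  by apply: Hij; rewrite /ev !enum_rankK.
apply/rowP => i; rewrite mxE.
have := conn_const Hf (ev i) (ev k); rewrite /f /ev !enum_valK rk0 mul0r.
by move/eqP; rewrite mulf_eq0 invr_eq0 (negPf (sq_neq0 _)) orbF => /eqP.
Qed.


Lemma row_neq0 i : row i Um != 0.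
Proof.
apply/eqP => H; have := row_orth i i; rewrite eqxx big1.
  by move/eqP; rewrite eq_sym oner_eq0.
move=> k _; move/rowP: H => /(_ k); rewrite !mxE => ->.
by rewrite mul0r.
Qed.

Lemma dd_le1 i : 0 <= 1 - ddf i.
Proof. exact: le1 (eig_row i) (row_neq0 i). Qed.

Lemma dd_real i : ddf i \is Num.real.
Proof. by apply: ler1_real; rewrite -subr_ge0 dd_le1. Qed.

Lemma dd1_unique i j : ddf i = 1 -> ddf j = 1 -> i = j.
Proof.
move=> hi hj; case: (eqVneq i j) => // nij.
pose k := enum_rank u0.
pose z := (Um j k) *: row i Um - (Um i k) *: row j Um.
have Hz : z *m Smx = z by rewrite mulmxBl -!scalemxAl !eig_row hi hj !scale1r.
have z0 : z 0 k = 0 by rewrite !mxE mulrC subrr.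
have zz := harm0 Hz z0.
have : \sum_l z 0 l * (Um i l)^* = Um j k.
  under eq_bigr do rewrite !mxE mulrBl.
rewrite sumrB. under eq_bigr do rewrite -mulrA. under [X in _ - X]eq_bigr do rewrite -mulrA. rewrite -!mulr_sumr !row_orth eqxx eq_sym (negPf nij).
  by rewrite mulr1 mulr0 subr0.
rewrite zz big1 => [ujk|l _]; last by rewrite mxE mul0r.
have Hj : row j Um *m Smx = row j Um by rewrite eig_row hj scale1r.
have := harm0 Hj (k := k); rewrite mxE -ujk => /(_ erefl) /eqP.
by rewrite (negPf (row_neq0 j)).
Qed.

Lemma eig_exists (v : 'rV_#|T|) a : v *m Smx = a *: v -> v != 0 -> exists i, ddf i = a.
Proof.
move=> Hv vn0.
have : root (char_poly Smx) a by rewrite -eigenvalue_root_char; apply/eigenvalueP; exists v.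
rewrite char_S /root horner_prod => /prodf_eq0 [i _].
by rewrite hornerXsubC subr_eq0 => /eqP ->; exists i.
Qed.

Lemma sum_col j : \sum_i EC (ev i) (ev j) = sq (ev j) * sq (ev j).
Proof.
rewrite sqK dC_sum -(sumT (fun y => EC (ev j) y)).
by apply: eq_bigr => i _; rewrite EC_sym.
Qed.

Lemma ex_eig1 : exists i, ddf i = 1.
Proof.
pose v := \row_i sq (ev i).
apply: (@eig_exists v).
  apply/rowP => j; rewrite !mxE mul1r.
  transitivity ((\sum_i EC (ev i) (ev j)) / sq (ev j)); last first.
    by rewrite sum_col mulrK // unitfE sq_neq0.
  rewrite mulr_suml; apply: eq_bigr => i _; rewrite mxE.
  by rewrite mxE; field; rewrite !sq_neq0.
apply/eqP => /rowP /(_ (enum_rank u0)); rewrite !mxE => /eqP.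
by rewrite (negPf (sq_neq0 _)).
Qed.

Variable c : T -> bool.
Hypothesis hc : forall x y, e x y -> c x != c y.
Definition sg (x : T) : algC := if c x then 1 else -1.

Lemma sg_edge x y : EC x y * sg x = - (EC x y * sg y).
Proof.
rewrite /EC /sg; case: (boolP (e x y)) => exy; last by rewrite !mul0r oppr0.
by have := hc exy; case: (c x); case: (c y) => //= _; rewrite !mul1r ?opprK.
Qed.

Lemma ex_eigm1 : exists i, ddf i = -1.
Proof.
pose v := \row_i (sg (ev i) * sq (ev i)).
apply: (@eig_exists v).
  apply/rowP => j; rewrite !mxE.
  transitivity ((\sum_i EC (ev i) (ev j)) * (- sg (ev j)) / sq (ev j)); last first.
    rewrite sum_col; field; by rewrite sq_neq0.
  rewrite mulr_suml mulr_suml; apply: eq_bigr => i _; rewrite mxE.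
  rewrite mxE mulrN -sg_edge.
  by field; rewrite !sq_neq0.
apply/eqP => /rowP /(_ (enum_rank u0)); rewrite !mxE => /eqP.
by rewrite mulf_eq0 (negPf (sq_neq0 _)) orbF /sg; case: (c _); rewrite ?oppr_eq0 oner_eq0.
Qed.


Lemma tr_conj (M : 'M[algC]_#|T|) : \tr (invmx Um *m M *m Um) = \tr M.
Proof. by rewrite mxtrace_mulC mulmxA mulmxV ?U_unit // mul1mx. Qed.

Lemma sum_dd : \sum_i ddf i = 0.
Proof.
rewrite /ddf -mxtrace_diag -tr_conj -S_decomp /mxtrace big1 // => i _.
by rewrite mxE /EC eirr mul0r.
Qed.

Lemma sum_dd2 :
  \sum_i ddf i ^+ 2 = \sum_i \sum_j EC (ev i) (ev j) / (dC (ev i) * dC (ev j)).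
Proof.
have H : Smx *m Smx = invmx Um *m (diag_mx dd *m diag_mx dd) *m Um.
  by rewrite {1 2}S_decomp -!mulmxA (mulmxA Um (invmx Um)) mulmxV ?U_unit // mul1mx.
have -> : \sum_i ddf i ^+ 2 = \tr (Smx *m Smx).
  by rewrite H tr_conj mulmx_diag mxtrace_diag; apply: eq_bigr => i _; rewrite mxE expr2.
rewrite /mxtrace; apply: eq_bigr => i _; rewrite mxE.
apply: eq_bigr => j _; rewrite !mxE [EC (ev j) (ev i)]EC_sym -!sqK -[in RHS]EC2.
by field; rewrite !sq_neq0.
Qed.

Lemma sum_dd_fun : \sum_i ddf i ^+ 2 = \sum_i ddf i ^+ 2.
Proof. by []. Qed.


Definition sgb (b : bool) : algC := if b then 1 else -1.
Definition Dsum := \sum_x dC x.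
Definition R2T := \sum_x \sum_y EC x y / (dC x * dC y).

Lemma dC_neq0 x : dC x != 0.
Proof. by rewrite gt_eqF // dC_gt0. Qed.

Lemma Dsum_neq0 : Dsum != 0.
Proof.
apply/eqP => H.
have := psumr_eq0P (fun x _ => ltW (dC_gt0 x)) H (i := u0) isT.
by move/eqP; rewrite (negPf (dC_neq0 u0)).
Qed.

Lemma sum_EC : \sum_x \sum_y EC x y = Dsum.
Proof. by apply: eq_bigr => x _; rewrite dC_sum. Qed.

Lemma sg_sum (col : T -> bool) : (forall x y, e x y -> col x != col y) ->
  \sum_x sgb (col x) * dC x = 0.
Proof.
move=> hcol.
have se x y : EC x y * sgb (col x) = - (EC x y * sgb (col y)).
  rewrite /EC /sgb; case: (boolP (e x y)) => exy; last by rewrite !mul0r oppr0.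
  by have := hcol _ _ exy; case: (col x); case: (col y) => //= _; rewrite !mul1r ?opprK.
set X := \sum_x _.
have HX : X = - X.
  rewrite {1}/X.
  transitivity (\sum_x \sum_y EC x y * sgb (col x)).
    by apply: eq_bigr => x _; rewrite dC_sum mulr_sumr; apply: eq_bigr => y _; rewrite mulrC.
  rewrite exchange_big /= /X -sumrN; apply: eq_bigr => y _.
  rewrite dC_sum mulr_sumr -sumrN; apply: eq_bigr => x _.
  by rewrite se EC_sym mulrC.
have : X *+ 2 == 0 by rewrite mulr2n {2}HX subrr.
by rewrite mulrn_eq0 /= => /eqP.
Qed.

Lemma sum_prod (F G : T -> algC) :
  \sum_x \sum_y F x * G y = (\sum_x F x) * (\sum_y G y).
Proof. by rewrite mulr_suml; apply: eq_bigr => x _; rewrite mulr_sumr. Qed.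

Definition Nf (col : T -> bool) x y :=
  EC x y / (dC x * dC y) - (1 - sgb (col x) * sgb (col y)) / Dsum.

Lemma key_identity (col : T -> bool) : (forall x y, e x y -> col x != col y) ->
  \sum_x \sum_y dC x * dC y * Nf col x y ^+ 2 = R2T - 2.
Proof.
move=> hcol.
have term x y : dC x * dC y * Nf col x y ^+ 2 =
   EC x y / (dC x * dC y) - 4 / Dsum * EC x y + 2 / (Dsum * Dsum) * (dC x * dC y)
   - 2 / (Dsum * Dsum) * ((sgb (col x) * dC x) * (sgb (col y) * dC y)).
  have hx := dC_neq0 x; have hy := dC_neq0 y; have hD := Dsum_neq0.
  rewrite /Nf /EC /sgb; case: (boolP (e x y)) => exy.
    have := hcol _ _ exy.
    by case: (col x); case: (col y) => //= _; rewrite mulr1n; field;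
       rewrite ?hx ?hy ?hD.
  by case: (col x); case: (col y); rewrite /= mulr0n; field; rewrite ?hx ?hy ?hD.
under eq_bigr do under eq_bigr do rewrite term.
under eq_bigr do rewrite sumrB big_split /= sumrB.
rewrite sumrB big_split /= sumrB.
have -> : \sum_x \sum_y 4 / Dsum * EC x y = 4 / Dsum * Dsum.
  by rewrite -{3}sum_EC mulr_sumr; apply: eq_bigr => x _; rewrite mulr_sumr.
have -> : \sum_x \sum_y 2 / (Dsum * Dsum) * (dC x * dC y) = 2 / (Dsum * Dsum) * (Dsum * Dsum).
  under eq_bigr do rewrite -mulr_sumr.
  by rewrite -mulr_sumr (sum_prod dC dC).
have -> : \sum_x \sum_y 2 / (Dsum * Dsum) * ((sgb (col x) * dC x) * (sgb (col y) * dC y)) = 0.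
  under eq_bigr do rewrite -mulr_sumr.
  rewrite -mulr_sumr (sum_prod (fun x => sgb (col x) * dC x) (fun y => sgb (col y) * dC y)).
  by rewrite sg_sum // mul0r mulr0.
rewrite /R2T subr0; field; exact: Dsum_neq0.
Qed.


Lemma sgb_real b : sgb b \is Num.real.
Proof. by rewrite /sgb; case: b; rewrite ?rpredN rpred1. Qed.

Lemma Nf_real col x y : Nf col x y \is Num.real.
Proof.
have dr z : dC z \is Num.real by rewrite realn.
rewrite /Nf; apply: rpredB; apply: rpredM.
- by rewrite /EC realn.
- by rewrite realV rpredM.
- by apply: rpredB; [apply: rpred1 | apply: rpredM; apply: sgb_real].
- by rewrite realV; apply: rpred_sum.
Qed.

Lemma R2_complete (col : T -> bool) : (forall x y, e x y -> col x != col y) ->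
  R2T = 2 -> forall x y, e x y = (col x != col y).
Proof.
move=> hcol hR x y.
have H := key_identity hcol; rewrite hR subrr in H.
have ge0 x' y' : 0 <= dC x' * dC y' * Nf col x' y' ^+ 2.
  apply: mulr_ge0; first by apply: mulr_ge0; apply: ltW; apply: dC_gt0.
  by rewrite -realEsqr Nf_real.
have Hx := psumr_eq0P (fun x' _ => sumr_ge0 _ (fun y' _ => ge0 x' y')) H (i := x) isT.
have := psumr_eq0P (fun y' _ => ge0 x y') Hx (i := y) isT.
move/eqP; rewrite !mulf_eq0 (negPf (dC_neq0 x)) (negPf (dC_neq0 y)) orbb /=.
rewrite /Nf subr_eq0 => /eqP hN.
case: (eqVneq (col x) (col y)) => hxy.
  apply/negbTE/negP => exy.
  by move: (hcol _ _ exy); rewrite hxy eqxx.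
apply/negPn/negP => nexy.
have s2 : 1 - sgb (col x) * sgb (col y) = 2.
  by move: hxy; rewrite /sgb; case: (col x); case: (col y) => //= _; ring.
move: hN; rewrite s2 /EC (negPf nexy) mul0r => /eqP.
by rewrite eq_sym mulf_eq0 invr_eq0 pnatr_eq0 (negPf Dsum_neq0).
Qed.

Lemma sum2_neq0 (a b : algC) : a != 0 -> b != 0 -> a * b + b * a != 0.
Proof.
move=> ha hb; rewrite [b * a]mulrC -mulr2n mulrn_eq0 /= mulf_eq0.
by rewrite (negPf ha) (negPf hb).
Qed.

Definition cnt (col : T -> bool) (b : bool) : algC := \sum_y ((col y == b) : nat)%:R.

Lemma complete_R2 (col : T -> bool) : (forall x y, e x y = (col x != col y)) -> R2T = 2.
Proof.
move=> hcomp.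
have hcol x y : e x y -> col x != col y by rewrite hcomp.
have hd x : dC x = cnt col (~~ col x).
  rewrite dC_sum /cnt; apply: eq_bigr => y _; rewrite /EC hcomp.
  by case: (col x); case: (col y).
have hD : Dsum = cnt col true * cnt col false + cnt col false * cnt col true.
  rewrite /Dsum.
  transitivity (\sum_x (((col x == true) : nat)%:R * cnt col false
                       + ((col x == false) : nat)%:R * cnt col true)).
    by apply: eq_bigr => x _; rewrite hd; case: (col x); rewrite /= ?mul1r ?mul0r ?addr0 ?add0r.
  by rewrite big_split /= -!mulr_suml.
have HN x y : Nf col x y = 0.
  rewrite /Nf /EC hcomp.
  case: (eqVneq (col x) (col y)) => hxy.
    by rewrite hxy /sgb; case: (col y); rewrite /= ?mulr0n ?mul0r; ring.
  rewrite /= mulr1n hD.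
  have := dC_neq0 x; have := dC_neq0 y; rewrite !hd.
  move: hxy; rewrite /sgb; case: (col x); case: (col y) => //= _ h1 h2; field;
    by rewrite ?h1 ?h2 ?sum2_neq0.
have := key_identity hcol.
rewrite big1 => [/eqP|x _]; last by rewrite big1 // => y _; rewrite HN expr0n /= mulr0.
by rewrite eq_sym subr_eq0 => /eqP.
Qed.


Definition hK (r : algC) := r ^+ 2 * (1 - r)^-1.

Lemma gK_split r : gK r = 1 + r + hK r - 2 * ((r == 1) : nat)%:R.
Proof.
rewrite /gK /hK; case: (eqVneq r 1) => [->|ne].
  by rewrite subrr invr0 mulr0 /=; ring.
have h : 1 - r != 0 by rewrite subr_eq0 eq_sym.
by rewrite /= mulr0 subr0; field.
Qed.

Lemma hK_ge0 i : 0 <= hK (ddf i).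
Proof.
by rewrite /hK mulr_ge0 // ?invr_ge0 ?dd_le1 // -realEsqr dd_real.
Qed.

Lemma count1 : \sum_i ((ddf i == 1) : nat)%:R = 1 :> algC.
Proof.
have [i1 h1] := ex_eig1.
rewrite (bigD1 i1) //= h1 eqxx big1 ?addr0 // => i ni.
case: eqP => // hi; case/negP: ni; apply/eqP; exact: dd1_unique hi h1.
Qed.

Lemma kem_eq : kemeny_e e = #|{: arc e}|%:R - 2 + \sum_i hK (ddf i).
Proof.
rewrite (kemeny_formula char_S).
under eq_bigr do rewrite gK_split.
rewrite sumrB !big_split /= -mulr_sumr count1 sum_dd sumr_const card_ord.
by rewrite addr0; ring.
Qed.

Lemma R2T_dd : \sum_i ddf i ^+ 2 = R2T.
Proof.
rewrite sum_dd2 /R2T.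
under eq_bigr do rewrite (sumT (fun y => EC (ev _) y / (dC (ev _) * dC y))).
by rewrite (sumT (fun x => \sum_y EC x y / (dC x * dC y))).
Qed.

Lemma m1_neq1 : (-1 : algC) != 1.
Proof. by rewrite lt_eqF // (lt_trans (ltrN10 _)) ?ltr01. Qed.


Lemma main_sec :
  (2 * (nedges e)%:R - 3 / 2 <= kemeny_e e) /\
  (kemeny_e e = 2 * (nedges e)%:R - 3 / 2 <-> complete_bipartite e).
Proof.
have [i0 h0] := ex_eigm1.
have hN : (#|{: arc e}|%:R : algC) = 2 * (nedges e)%:R by rewrite card_arc // natrM.
set rest := \sum_(i | i != i0) hK (ddf i).
have hsum : \sum_i hK (ddf i) = 2^-1 + rest.
  rewrite (bigD1 i0) //= h0 /hK sqrrN expr1n mul1r opprK; congr (_ + _).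
have rest_ge0 : 0 <= rest by apply: sumr_ge0 => i _; apply: hK_ge0.
have hK_eq : kemeny_e e = 2 * (nedges e)%:R - 3 / 2 + rest.
  by rewrite kem_eq hN hsum; field.
split; first by rewrite hK_eq lerDl.
rewrite hK_eq.
have E1 (x : algC) : x + rest = x <-> rest = 0.
  by split => [H|->]; [apply: (addrI x); rewrite addr0 | rewrite addr0].
rewrite E1.
have E2 : rest = 0 <-> R2T = 2.
  split.
    move=> H0.
    have hsq i : i != i0 -> ddf i ^+ 2 = ((ddf i == 1) : nat)%:R.
      move=> ni; have := psumr_eq0P (fun i _ => hK_ge0 i) H0 ni.
      rewrite /hK => /eqP; rewrite mulf_eq0 invr_eq0 subr_eq0 expf_eq0 /=.
      case/orP => /eqP h; first by rewrite h expr0n /= eq_sym (negPf (oner_neq0 _)).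
      by rewrite -h expr1n eqxx.
    rewrite -R2T_dd (bigD1 i0) //= h0 sqrrN expr1n.
    under eq_bigr => i ni do rewrite (hsq i ni).
    have := count1; rewrite (bigD1 i0) //= h0 (negPf m1_neq1) add0r => ->.
    by [].
  move=> H2; have [i1 h1] := ex_eig1.
  have n10 : i1 != i0 by apply/eqP => h; move: h0; rewrite -h h1 => /eqP; rewrite eq_sym (negPf m1_neq1).
  have Hs : \sum_(i | (i != i0) && (i != i1)) ddf i ^+ 2 = 0.
    have := R2T_dd; rewrite H2 (bigD1 i0) //= (bigD1 i1) //= h0 h1 sqrrN expr1n => H.
    have -> : \sum_(i | (i != i0) && (i != i1)) ddf i ^+ 2
       = (1 + (1 + \sum_(i | (i != i0) && (i != i1)) ddf i ^+ 2)) - 2 by ring.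
    by rewrite H subrr.
  have hz i : i != i0 -> i != i1 -> ddf i = 0.
    move=> a b.
    have ge i' : (i' != i0) && (i' != i1) -> 0 <= ddf i' ^+ 2.
      by move=> _; rewrite -realEsqr dd_real.
    have := psumr_eq0P ge Hs (i := i); rewrite a b => /(_ isT) /eqP.
    by rewrite expf_eq0 /= => /eqP.
  rewrite /rest (bigD1 i1) //= h1 /hK subrr invr0 mulr0 add0r big1 // => i /andP [ni0 ni1].
  by rewrite hz // expr0n /= mul0r.
rewrite E2; split.
  by move=> H; exists c; apply: R2_complete hc H.
by case=> c' hc'; apply: complete_R2 hc'.
Qed.

End Graph.

Theorem lemma4p3 (T : finType) (e : rel T) :
  simple_graph e -> connected_graph e -> bipartite e -> (0 < nedges e)%N ->
  (2 * (nedges e)%:R - 3 / 2 <= kemeny_e e) /\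
  (kemeny_e e = 2 * (nedges e)%:R - 3 / 2 <-> complete_bipartite e).
Proof.
move=> [hsym hirr] hcon [c hc] hm.
have [u0 [w0 h]] : exists u v, e u v.
  move: hm; rewrite /nedges card_gt0 => /set0Pn [E]; rewrite inE.
  by case/existsP => u /existsP [v /andP [euv _]]; exists u, v.
exact: (main_sec hsym hirr hcon h hc).
Qed.
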